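(* Let $k\ge0$ be an integer, let $\mathcal H$ be a hypergraph, and let $\vec{\mathcal H}$ and $\vec{\mathcal H}'$ be two $k$-hyperarc-connected orientations of $\mathcal H$. Then there is a sequence $\vec{\mathcal H}=\vec{\mathcal H}_0,\vec{\mathcal H}_1,\ldots,\vec{\mathcal H}_\ell=\vec{\mathcal H}'$ of $k$-hyperarc-connected orientations of $\mathcal H$ such that for each $1\le i\le \ell$, $\vec{\mathcal H}_i$ arises from $\vec{\mathcal H}_{i-1}$ by reversing one directed hypercycle or one directed hyperpath of $\vec{\mathcal H}_{i-1}$.
   Context: A hypergraph $\mathcal H=(V,\mathcal E)$ consists of a finite vertex set $V$ and a finite multiset $\mathcal E$ of nonempty subsets of $V$ (hyperedges). Orienting a hyperedge $Z$ towards a vertex $v\in Z$ yields the hyperarc $(Z\setminus\{v\},v)$, with tail set $Z\setminus\{v\}$ and head $v$. An orientation $\vec{\mathcal H}$ of $\mathcal H$ is obtained by orienting every hyperedge (it is the multiset of resulting hyperarcs). For $\emptyset\ne X\subsetneq V$, the out-degree $d^+(X)$ is the number of hyperarcs $(Y,v)$ with $v\notin X$ and $Y\cap X\neq\emptyset$; $\vec{\mathcal H}$ is $k$-hyperarc-connected if $d^+(X)\ge k$ for every $\emptyset\neq X\subsetneq V$. For vertices $s,t$, an $(s,t)$-hyperpath is a sequence $(A_1,a_1),\ldots,(A_\ell,a_\ell)$ ($\ell\ge1$) of hyperarcs of the orientation with $s\in A_1$, $a_\ell=t$, $a_i\in A_{i+1}$ for $1\le i\le \ell-1$, and $a_1,\ldots,a_\ell$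 pairwise distinct; if $s=t$ it is called a directed hypercycle. Reversing such a hyperpath or hypercycle means, with $a_0:=s$, replacing each hyperarc $(A_i,a_i)$ by $((A_i\setminus\{a_{i-1}\})\cup\{a_i\},a_{i-1})$, for $i=1,\ldots,\ell$. *)

(* Defs.v *)
From mathcomp Require Import all_boot.
Set Implicit Arguments. Unset Strict Implicit. Unset Printing Implicit Defensive.

(* A hypergraph on a finite vertex type V is given by a finite index type I of
   hyperedge occurrences (so the hyperedges form a multiset) and E : I -> {set V};
   every hyperedge must be nonempty. *)
Definition hypergraph (V I : finType) (E : I -> {set V}) : Prop :=
  forall e, E e != set0.

(* An orientation chooses, for each hyperedge e, a head h e in E e.  The
   corresponding hyperarc is (tail E h e, h e). *)
Definition is_orientation (V I : finType) (E : I -> {set V}) (h : {ffun I -> V}) : Prop :=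
  forall e, h e \in E e.

Definition tail (V I : finType) (E : I -> {set V}) (h : {ffun I -> V}) (e : I) : {set V} :=
  E e :\ h e.

Definition outdeg (V I : finType) (E : I -> {set V}) (h : {ffun I -> V}) (X : {set V}) : nat :=
  #|[set e : I | (h e \notin X) && (tail E h e :&: X != set0)]|.

Definition k_hyperarc_connected (V I : finType) (E : I -> {set V}) (h : {ffun I -> V})
    (k : nat) : Prop :=
  forall X : {set V}, X != set0 -> X != setT -> k <= outdeg E h X.

(* p = [:: e_1; ...; e_l] (edge indices) gives the sequence of hyperarcs
   (A_i, a_i) = (tail E h e_i, h e_i).  It is an (s,t)-hyperpath (a directed
   hypercycle if s = t) iff l >= 1, s \in A_1, a_i \in A_{i+1}, a_l = t, and
   the heads a_1..a_l are pairwise distinct. *)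
Fixpoint hchain (V I : finType) (E : I -> {set V}) (h : {ffun I -> V})
    (x : V) (p : seq I) : bool :=
  match p with
  | [::] => true
  | e :: p' => (x \in tail E h e) && hchain E h (h e) p'
  end.

Definition is_hyperpath (V I : finType) (E : I -> {set V}) (h : {ffun I -> V})
    (s t : V) (p : seq I) : Prop :=
  [/\ p != [::], hchain E h s p, last s (map h p) = t & uniq (map h p)].

(* Reversal (with a_0 := s): the hyperarc (A_i, a_i) on hyperedge e_i becomes
   ((A_i \ a_{i-1}) u {a_i}, a_{i-1}), i.e. the head of e_i becomes a_{i-1};
   all other hyperarcs are unchanged. *)
Definition reverse_hyperpath (V I : finType) (h : {ffun I -> V}) (s : V) (p : seq I)
  : {ffun I -> V} :=
  [ffun e => if e \in p then nth s (s :: map h p) (index e p) else h e].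

Definition reversal_step (V I : finType) (E : I -> {set V}) (h h' : {ffun I -> V}) : Prop :=
  exists (s t : V) (p : seq I), is_hyperpath E h s t p /\ h' = reverse_hyperpath h s p.

(* Main.v *)
Require Import Defs.
From mathcomp Require Import all_boot.
From mathcomp Require Import zify.
Set Implicit Arguments. Unset Strict Implicit. Unset Printing Implicit Defensive.


Definition rho (V I : finType) (h : {ffun I -> V}) (X : {set V}) : nat :=
  \sum_(e : I) (h e \in X).
Definition cov (V I : finType) (E : I -> {set V}) (X : {set V}) : nat :=
  \sum_(e : I) (E e :&: X != set0).
Definition cnt (V I : finType) (h : {ffun I -> V}) (v : V) := rho h [set v].

Lemma card_sum (T : finType) (P : pred T) : #|[set e | P e]| = \sum_(e : T) P e.
Proof.
rewrite -sum1_card big_mkcond /=; apply: eq_bigr => e _; rewrite inE; by case: (P e).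
Qed.

Lemma outdeg_sum (V I : finType) (E : I -> {set V}) h X :
  outdeg E h X = \sum_(e : I) ((h e \notin X) && (tail E h e :&: X != set0)).
Proof. by rewrite /outdeg card_sum. Qed.

Lemma deg_rho (V I : finType) (E : I -> {set V}) h X :
  is_orientation E h -> outdeg E h X + rho h X = cov E X.
Proof.
move=> Ho; rewrite outdeg_sum /rho /cov -big_split /=; apply: eq_bigr => e _.
have He := Ho e; case hX: (h e \in X) => /=.
  suff -> : (E e :&: X != set0) by [].
  by apply/set0Pn; exists (h e); rewrite inE He hX.
rewrite addn0; suff -> : tail E h e :&: X = E e :&: X by [].
apply/setP => v; rewrite /tail !inE; case: eqP => // ->; by rewrite hX !andbF.
Qed.

Lemma meet_sub (T : finType) (A B C : {set T}) : B \subset C ->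
  A :&: B != set0 -> A :&: C != set0.
Proof.
move=> /subsetP sBC /set0Pn [v]; rewrite inE => /andP[vA vB].
by apply/set0Pn; exists v; rewrite inE vA sBC.
Qed.

Lemma submod (V I : finType) (E : I -> {set V}) h X Y :
  outdeg E h (X :&: Y) + outdeg E h (X :|: Y) <= outdeg E h X + outdeg E h Y.
Proof.
rewrite !outdeg_sum -!big_split; apply: leq_sum => e _ /=.
have H1 : tail E h e :&: (X :&: Y) != set0 -> tail E h e :&: X != set0.
  by apply: meet_sub; apply: subsetIl.
have H2 : tail E h e :&: (X :&: Y) != set0 -> tail E h e :&: Y != set0.
  by apply: meet_sub; apply: subsetIr.
have H3 : (tail E h e :&: (X :|: Y) != set0) = (tail E h e :&: X != set0) || (tail E h e :&: Y != set0).
  by rewrite setIUr setU_eq0 negb_and.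
rewrite H3 !inE; move: H1 H2.
case: (tail E h e :&: (X :&: Y) != set0); case: (tail E h e :&: X != set0);
case: (tail E h e :&: Y != set0); case: (h e \in X); case: (h e \in Y) => //=; 
by move=> /(_ isT) ? /(_ isT) ?.
Qed.

Lemma rho_compl (V I : finType) (h : {ffun I -> V}) A : rho h A + rho h (~: A) = #|I|.
Proof.
rewrite /rho -big_split /= -sum1_card; apply: eq_bigr => e _; rewrite inE; by case: (h e \in A).
Qed.

Lemma rho_sum (V I : finType) (h : {ffun I -> V}) X : rho h X = \sum_(v in X) cnt h v.
Proof.
rewrite /cnt /rho exchange_big /=; apply: eq_bigr => e _.
case hX: (h e \in X).
  rewrite (bigD1 (h e)) //= inE eqxx big1 // => v /andP[_ nv]; rewrite inE eq_sym.
  by rewrite (negbTE nv).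
rewrite big1 // => v vX; rewrite inE; case: eqP => // ev; by rewrite ev vX in hX.
Qed.

Lemma sum_lt (T : finType) (P : pred T) (f g : T -> nat) s :
  P s -> (forall v, P v -> f v <= g v) -> f s < g s ->
  \sum_(v | P v) f v < \sum_(v | P v) g v.
Proof.
move=> Ps Hle Hlt; rewrite (bigD1 s) //= [X in _ < X](bigD1 s) //= -addSn.
apply: leq_add => //; apply: leq_sum => v /andP[Pv _]; exact: Hle.
Qed.

Lemma rho_split (V I : finType) (h : {ffun I -> V}) (A U : {set V}) : A \subset U ->
  rho h U = rho h A + rho h (U :\: A).
Proof.
move=> /subsetP sAU; rewrite /rho -big_split; apply: eq_bigr => e _ /=; rewrite inE.
case hA: (h e \in A) => /=; first by rewrite sAU.
by rewrite add0n.
Qed.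

Fixpoint chainP (V I : finType) (P : V -> I -> bool) (h : {ffun I -> V}) (x : V) (q : seq I) : bool :=
  match q with
  | [::] => true
  | e :: q' => P x e && chainP P h (h e) q'
  end.

Lemma hchainE (V I : finType) (E : I -> {set V}) h x q :
  hchain E h x q = chainP (fun x e => x \in tail E h e) h x q.
Proof. by elim: q x => //= e q IH x; rewrite IH. Qed.

Lemma chainP_imp (V I : finType) (P Q : V -> I -> bool) h x q :
  (forall x e, P x e -> Q x e) -> chainP P h x q -> chainP Q h x q.
Proof.
move=> PQ; elim: q x => //= e q IH x /andP[p c]; by rewrite PQ // IH.
Qed.

Lemma path_edges (V I : finType) (P : V -> I -> bool) (h : {ffun I -> V}) x p :
  path (fun a b => [exists e, P a e && (h e == b)]) x p ->
  exists q, map h q = p /\ chainP P h x q.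
Proof.
elim: p x => [|y p IH] x /=; first by exists [::].
case/andP => /existsP [e /andP[Pe /eqP he]] pa.
have [q [mq cq]] := IH _ pa; exists (e :: q) => /=; by rewrite he mq Pe cq.
Qed.

Lemma chain_nth (V I : finType) (P : V -> I -> bool) (h : {ffun I -> V}) x q :
  chainP P h x q -> {in q, forall e, P (nth x (x :: map h q) (index e q)) e}.
Proof.
elim: q x => //= e q IH x /andP[Pe cq] e'; rewrite inE.
case: (eqVneq e e') => [<- _ | ne] /=; first by [].
move=> /= e'q; rewrite (set_nth_default (h e)); last by rewrite /= size_map; apply: leqW; rewrite index_mem.
exact: IH.
Qed.

Lemma sum_belast (T : Type) (f : T -> nat) s l :
  \sum_(v <- belast s l) f v + f (last s l) = f s + \sum_(v <- l) f v.
Proof.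
elim: l s => [|y l IH] s /=; first by rewrite !big_nil addn0.
by rewrite !big_cons -addnA IH.
Qed.

Lemma rev_map (V I : finType) (h : {ffun I -> V}) s q : uniq q ->
  map (reverse_hyperpath h s q) q = belast s (map h q).
Proof.
move=> uq; have -> : map (reverse_hyperpath h s q) q =
   [seq nth s (s :: map h q) (index e q) | e <- q].
  by apply/eq_in_map => e eq; rewrite /reverse_hyperpath ffunE eq.
elim: q s uq => //= e q IH s /andP[nq uq]; rewrite eqxx /=; congr cons.
rewrite -(IH (h e) uq); apply/eq_in_map => e' e'q /=.
have -> : (e == e') = false by apply/eqP => ee; rewrite ee e'q in nq.
by rewrite /= (set_nth_default (h e)) //= size_map; apply: leqW; rewrite index_mem.
Qed.

Lemma rev_out (V I : finType) (h : {ffun I -> V}) s q e : e \notin q ->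
  reverse_hyperpath h s q e = h e.
Proof. by move=> nq; rewrite /reverse_hyperpath ffunE (negbTE nq). Qed.

Lemma rev_in (V I : finType) (h : {ffun I -> V}) s q e : e \in q ->
  reverse_hyperpath h s q e = nth s (s :: map h q) (index e q).
Proof. by move=> iq; rewrite /reverse_hyperpath ffunE iq. Qed.

Lemma sum_split_seq (I : finType) (q : seq I) (F : I -> nat) : uniq q ->
  \sum_(e : I) F e = \sum_(e <- q) F e + \sum_(e | e \notin q) F e.
Proof.
move=> uq; rewrite (bigID (fun e => e \in q)) /= big_uniq //.
Qed.
Lemma rho_rev (V I : finType) (E : I -> {set V}) h s t q X :
  is_hyperpath E h s t q ->
  rho (reverse_hyperpath h s q) X + (t \in X) = rho h X + (s \in X).
Proof.
case=> _ _ <- um; have uq := map_uniq um.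
rewrite /rho (sum_split_seq _ uq) [in RHS](sum_split_seq _ uq).
have -> : \sum_(i | i \notin q) (reverse_hyperpath h s q i \in X) =
          \sum_(i | i \notin q) (h i \in X).
  by apply: eq_bigr => e /= nq; rewrite rev_out.
have E1 : \sum_(e <- q) (reverse_hyperpath h s q e \in X) = \sum_(v <- belast s (map h q)) (v \in X).
  by rewrite -rev_map // big_map.
have E2 : \sum_(e <- q) (h e \in X) = \sum_(v <- map h q) (v \in X).
  by rewrite big_map.
rewrite E1 E2.
have := sum_belast (fun v => (v \in X) : nat) s (map h q).
move: (\sum_(v <- belast _ _) _) (\sum_(v <- map h q) _) (\sum_(e | e \notin q) _) ((last _ _ \in X) : nat) ((s \in X) : nat) => a b c d f; lia.
Qed.


Lemma rev_orient (V I : finType) (E : I -> {set V}) h s t q :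
  is_hyperpath E h s t q ->
  is_orientation E h -> is_orientation E (reverse_hyperpath h s q).
Proof.
move=> [_ hc _ _] Ho e; case: (boolP (e \in q)) => eq; last by rewrite rev_out.
rewrite hchainE in hc.
rewrite rev_in //; have := chain_nth hc eq.
by rewrite /tail inE => /andP[].
Qed.

Lemma deg_rev (V I : finType) (E : I -> {set V}) h s t q X :
  is_hyperpath E h s t q -> is_orientation E h ->
  outdeg E (reverse_hyperpath h s q) X + (s \in X) = outdeg E h X + (t \in X).
Proof.
move=> hp Ho; have := rho_rev X hp; have := deg_rho X Ho.
have := deg_rho X (rev_orient hp Ho).
move: (rho _ X) (rho h X) (outdeg _ _ X) (outdeg E h X) ((s \in X) : nat) ((t \in X) : nat) (cov E X).
move=> a b c d f g i; lia.
Qed.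

Definition goodA (V I : finType) (E : I -> {set V}) (k : nat) h (s : V) (A : {set V}) :=
  [&& s \notin A, A != set0 & outdeg E h (~: A) <= k].

Lemma goodA_rho (V I : finType) (E : I -> {set V}) k h h' s A :
  is_orientation E h -> is_orientation E h' -> k_hyperarc_connected E h' k ->
  goodA E k h s A -> rho h A <= rho h' A.
Proof.
move=> Ho Ho' Hk' /and3P[sA An dA].
have sX : s \in ~: A by rewrite inE.
have X0 : ~: A != set0 by apply/set0Pn; exists s.
have XT : ~: A != setT.
  apply/negP => /eqP XT; case/set0Pn: An => v vA.
  by have := in_setT v; rewrite -XT inE vA.
have := Hk' _ X0 XT; have := deg_rho (~: A) Ho; have := deg_rho (~: A) Ho'.
have := rho_compl h A; have := rho_compl h' A.
move: dA; move: (rho h A) (rho h' A) (rho h (~: A)) (rho h' (~: A)) (outdeg E h (~: A))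
  (outdeg E h' (~: A)) (cov E (~: A)) #|I|.
move=> a b c d f g i j; lia.
Qed.

Lemma goodA_union (V I : finType) (E : I -> {set V}) k h s A B :
  k_hyperarc_connected E h k ->
  goodA E k h s A -> goodA E k h s B -> A :&: B != set0 -> goodA E k h s (A :|: B).
Proof.
move=> Hk /and3P[sA An dA] /and3P[sB Bn dB] AB.
apply/and3P; split.
- by rewrite inE negb_or sA sB.
- by case/set0Pn: An => v vA; apply/set0Pn; exists v; rewrite inE vA.
have := submod E h (~: A) (~: B); rewrite -setCU -setCI.
have X0 : ~: (A :&: B) != set0 by apply/set0Pn; exists s; rewrite !inE negb_and sA.
have XT : ~: (A :&: B) != setT.
  apply/negP => /eqP XT; case/set0Pn: AB => v vA.
  by have := in_setT v; rewrite -XT inE vA.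
have := Hk _ X0 XT.
move: dA dB; move: (outdeg E h (~: A)) (outdeg E h (~: B)) (outdeg E h (~: (A :|: B))) (outdeg E h (~: (A :&: B))).
move=> a b c d; lia.
Qed.

Lemma rho_set0 (V I : finType) (h : {ffun I -> V}) : rho h set0 = 0.
Proof. by rewrite /rho big1 // => e _; rewrite inE. Qed.

Lemma cover (V I : finType) (E : I -> {set V}) k h h' s :
  is_orientation E h -> is_orientation E h' -> k_hyperarc_connected E h k ->
  k_hyperarc_connected E h' k ->
  forall U : {set V}, (forall v, v \in U -> exists A, [/\ goodA E k h s A, v \in A & A \subset U]) ->
  rho h U <= rho h' U.
Proof.
move=> Ho Ho' Hk Hk' U; move: {2}#|U| (leqnn #|U|) => n; elim: n U => [|n IH] U hU cU.
  by move: hU; rewrite leqn0 cards_eq0 => /eqP ->; rewrite rho_set0.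
case: (set_0Vmem U) => [->|[v vU]]; first by rewrite rho_set0.
have [A0 [gA0 _ sA0]] := cU v vU.
pose P := (fun A : {set V} => goodA E k h s A && (A \subset U)).
have PA0 : P A0 by rewrite /P gA0 sA0.
case: (@arg_maxnP _ A0 P (fun A : {set V} => #|A|) PA0) => A /andP[gA sAU] maxA.
rewrite (rho_split h sAU) (rho_split h' sAU).
apply: leq_add; first exact: goodA_rho gA.
apply: IH.
  have := cardsID A U; rewrite (setIidPr sAU).
  have : 0 < #|A| by rewrite card_gt0; case/and3P: gA.
  move: hU; move: #|A| #|U :\: A| #|U| => a b c; lia.
move=> x; rewrite inE => /andP[xA xU].
have [B [gB xB sBU]] := cU x xU; exists B; split => //.
have AB0 : A :&: B == set0.
  apply/negPn/negP => AB.
  have gAB := goodA_union Hk gA gB AB.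
  have sABU : A :|: B \subset U by rewrite subUset sAU sBU.
  have := maxA (A :|: B); rewrite /P gAB sABU => /(_ isT) le.
  have : A == A :|: B by rewrite eqEcard subsetUl; exact: le.
  by move/eqP => eA; move: xA; rewrite eA inE xB orbT.
apply/subsetP => y yB; rewrite inE (subsetP sBU) // andbT.
apply/negP => yA; move/eqP/setP: AB0 => /(_ y); by rewrite !inE yA yB.
Qed.

Lemma exchange (V I : finType) (E : I -> {set V}) k h h' s :
  is_orientation E h -> is_orientation E h' -> k_hyperarc_connected E h k ->
  k_hyperarc_connected E h' k -> cnt h s < cnt h' s ->
  exists t, cnt h' t < cnt h t /\ forall X : {set V}, s \in X -> t \notin X -> k < outdeg E h X.
Proof.
move=> Ho Ho' Hk Hk' lts.
case: (boolP [exists t, (cnt h' t < cnt h t) &&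
   [forall X : {set V}, (s \in X) ==> (t \notin X) ==> (k < outdeg E h X)]]).
  case/existsP => t /andP[lt /forallP H]; exists t; split=> // X sX tX.
  by move: (H X); rewrite sX tX.
move/existsPn => Hn; exfalso.
pose U := [set v | [exists A, goodA E k h s A && (v \in A)]].
have cU : rho h U <= rho h' U.
  apply: (@cover V I E k h h' s Ho Ho' Hk Hk') => v; rewrite inE => /existsP [A /andP[gA vA]].
  exists A; split => //; apply/subsetP => x xA; rewrite inE; apply/existsP; exists A.
  by apply/andP.
have Zs : s \in ~: U.
  rewrite inE; apply/negP; rewrite inE => /existsP [A /andP[/and3P[sA _ _] vA]].
  by rewrite vA in sA.
have Zle : forall v, v \in ~: U -> cnt h v <= cnt h' v.
  move=> v vZ; rewrite leqNgt; apply/negP => lt.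
  move: (Hn v); rewrite lt /= => /forallPn [X]; rewrite negb_imply => /andP[sX].
  rewrite negb_imply -leqNgt => /andP[vX dX].
  move: vZ; rewrite inE => /negP; apply; rewrite inE; apply/existsP; exists (~: X).
  rewrite inE vX andbT /goodA inE negbK sX setCK dX andbT /=.
  by apply/set0Pn; exists v; rewrite inE.
have := @sum_lt V (fun v => v \in ~: U) (fun v => cnt h v) (fun v => cnt h' v) s Zs Zle lts.
rewrite -!rho_sum.
have := rho_compl h U; have := rho_compl h' U.
move: cU; move: (rho h U) (rho h' U) (rho h (~: U)) (rho h' (~: U)) #|I|.
move=> a b c d i; lia.
Qed.

Definition mu (V I : finType) (h h' : {ffun I -> V}) := \sum_(v : V) (cnt h' v - cnt h v).

Lemma cnt_rev (V I : finType) (E : I -> {set V}) h s t q v :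
  is_hyperpath E h s t q ->
  cnt (reverse_hyperpath h s q) v + (t == v) = cnt h v + (s == v).
Proof. by move=> hp; rewrite /cnt -!in_set1; apply: rho_rev hp. Qed.

Lemma step1 (V I : finType) (E : I -> {set V}) k h h' s :
  is_orientation E h -> is_orientation E h' -> k_hyperarc_connected E h k ->
  k_hyperarc_connected E h' k -> cnt h s < cnt h' s ->
  exists h2, [/\ reversal_step E h h2, is_orientation E h2, k_hyperarc_connected E h2 k
     & mu h2 h' < mu h h'].
Proof.
move=> Ho Ho' Hk Hk' lts.
have [t [ltt Ht]] := exchange Ho Ho' Hk Hk' lts.
have st : s != t.
  apply/eqP => est; move: ltt; rewrite -est => lt2.
  by move: (ltn_trans lts lt2); rewrite ltnn.
pose rel1 := fun a b => [exists e, (a \in tail E h e) && (h e == b)].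
have ct : connect rel1 s t.
  apply/negPn/negP => nc; pose R := [set v | connect rel1 s v].
  have sR : s \in R by rewrite inE connect0.
  have tR : t \notin R by rewrite inE.
  have := Ht R sR tR.
  suff -> : outdeg E h R = 0 by [].
  rewrite /outdeg; apply/eqP; rewrite cards_eq0; apply/eqP/setP => e; rewrite !inE.
  apply/negP => /andP[he /set0Pn [x]]; rewrite inE => /andP[xt xR].
  move: he => /negP; apply.
  rewrite inE in xR; apply: (connect_trans xR); apply: connect1.
  by apply/existsP; exists e; rewrite xt eqxx.
case/connectP: ct => p pp tl.
move: tl; case: (shortenP pp) => p' pp' up' _ tl.
have [q [mq cq]] := @path_edges V I (fun a e => a \in tail E h e) h s p' pp'.
have hp : is_hyperpath E h s t q.
  split.
  - by apply/eqP => q0; move: mq tl; rewrite q0 /= => <- /= ts; rewrite ts eqxx in st.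
  - by rewrite hchainE.
  - by rewrite mq.
  - by rewrite mq; case/andP: up'.
exists (reverse_hyperpath h s q); split.
- by exists s, t, q.
- exact: rev_orient hp Ho.
- move=> X X0 XT; have := deg_rev X hp Ho; have := Hk X X0 XT.
  case sX: (s \in X); case tX: (t \in X) => /=.
  + move: (outdeg E h X) (outdeg E (reverse_hyperpath h s q) X) => a b; lia.
  + have := Ht X sX (negbT tX).
    move: (outdeg E h X) (outdeg E (reverse_hyperpath h s q) X) => a b; lia.
  + move: (outdeg E h X) (outdeg E (reverse_hyperpath h s q) X) => a b; lia.
  + move: (outdeg E h X) (outdeg E (reverse_hyperpath h s q) X) => a b; lia.
- rewrite /mu; apply: (@sum_lt V xpredT _ _ s) => //.
  + move=> v _; have := cnt_rev v hp.
    case: (eqVneq t v) => [etv|tv]; case: (eqVneq s v) => [esv|sv] /=.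
    * by move: st; rewrite etv esv eqxx.
    * rewrite -etv; move: ltt; move: (cnt h' t) (cnt h t) (cnt (reverse_hyperpath h s q) t) => a b c; lia.
    * rewrite -esv; move: (cnt h' s) (cnt h s) (cnt (reverse_hyperpath h s q) s) => a b c; lia.
    * move: (cnt h' v) (cnt h v) (cnt (reverse_hyperpath h s q) v) => a b c; lia.
  + have := cnt_rev s hp; rewrite eqxx eq_sym (negbTE st).
    move: lts; move: (cnt h' s) (cnt h s) (cnt (reverse_hyperpath h s q) s) => a b c; lia.
Qed.

Definition diff (V I : finType) (h h' : {ffun I -> V}) := [set e | h e != h' e].

Lemma cycle_step (V I : finType) (E : I -> {set V}) k h h' z q e2 :
  is_orientation E h -> is_orientation E h' -> k_hyperarc_connected E h k ->
  (forall v, cnt h v = cnt h' v) -> is_hyperpath E h z z q ->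
  (forall e, e \in q -> reverse_hyperpath h z q e = h' e) -> e2 \in q -> h e2 != h' e2 ->
  exists h2, [/\ reversal_step E h h2, is_orientation E h2, k_hyperarc_connected E h2 k,
     (forall v, cnt h2 v = cnt h' v) & #|diff h2 h'| < #|diff h h'|].
Proof.
move=> Ho Ho' Hk Hc hp h2q e2q ne2.
exists (reverse_hyperpath h z q); split.
- by exists z, z, q.
- exact: rev_orient hp Ho.
- move=> X X0 XT; have := deg_rev X hp Ho; have := Hk X X0 XT.
  move: (outdeg E h X) (outdeg E (reverse_hyperpath h z q) X) ((z \in X) : nat) => a b c; lia.
- move=> v; rewrite -Hc; have := cnt_rev v hp.
  move: (cnt (reverse_hyperpath h z q) v) (cnt h v) ((z == v) : nat) => a b c; lia.
- apply: proper_card; apply/properP; split.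
    apply/subsetP => e; rewrite !inE; case: (boolP (e \in q)) => eq.
      by rewrite h2q // eqxx.
    by rewrite rev_out.
  by exists e2; rewrite !inE ?ne2 // h2q ?eqxx.
Qed.

Lemma step2 (V I : finType) (E : I -> {set V}) k h h' :
  is_orientation E h -> is_orientation E h' -> k_hyperarc_connected E h k ->
  (forall v, cnt h v = cnt h' v) -> h != h' ->
  exists h2, [/\ reversal_step E h h2, is_orientation E h2, k_hyperarc_connected E h2 k,
     (forall v, cnt h2 v = cnt h' v) & #|diff h2 h'| < #|diff h h'|].
Proof.
move=> Ho Ho' Hk Hc hh.
have [e0 ne0] : exists e0, h e0 != h' e0.
  case: (boolP [exists e, h e != h' e]) => [/existsP//|/existsPn H].
  case/eqP: hh; apply/ffunP => e; apply/eqP; move: (H e); by rewrite negbK.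
pose relD := fun a b => [exists e, ((h e != h' e) && (h' e == a)) && (h e == b)].
have outarc : forall z e1, h e1 != h' e1 -> h e1 = z -> exists e, (h e != h' e) && (h' e == z).
  move=> z e1 ne1 he1.
  case: (boolP [exists e, (h e != h' e) && (h' e == z)]) => [/existsP//|/existsPn Hn].
  exfalso.
  have le : forall e, xpredT e -> ((h' e == z) : nat) <= (h e == z).
    move=> e _; case: (eqVneq (h' e) z) => // E'.
    by move: (Hn e); rewrite -E' eqxx andbT negbK => /eqP ->; rewrite eqxx.
  have lt : ((h' e1 == z) : nat) < (h e1 == z).
    by rewrite he1 eqxx; case: (eqVneq (h' e1) z) => // E'; by move: ne1; rewrite he1 E' eqxx.
  have := @sum_lt I xpredT _ _ e1 isT le lt.
  have := Hc z; rewrite /cnt /rho.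
  under eq_bigr do rewrite in_set1.
  under [in X in _ = X -> _]eq_bigr do rewrite in_set1.
  by move=> ->; rewrite ltnn.
pose S := [set y | [exists x, relD x y]].
pose anc := fun y => #|[set u | connect relD u y]|.
have y0S : h e0 \in S.
  by rewrite inE; apply/existsP; exists (h' e0); apply/existsP; exists e0; rewrite ne0 !eqxx.
case: (@arg_maxnP _ (h e0) (fun y => y \in S) anc y0S) => z zS maxz.
have [e1 /andP[ne1 /eqP he1]] : exists e1, (h e1 != h' e1) && (h e1 == z).
  move: zS; rewrite inE => /existsP [x /existsP [e /andP[/andP[ne _] hz]]].
  by exists e; rewrite ne hz.
have [e2 /andP[ne2 /eqP he2]] := outarc z e1 ne1 he1.
pose w := h e2.
have wS : w \in S.
  by rewrite inE; apply/existsP; exists z; apply/existsP; exists e2; rewrite ne2 he2 !eqxx.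
have cwz : connect relD w z.
  apply/negPn/negP => nc.
  have : anc z < anc w.
    apply: proper_card; apply/properP; split.
      apply/subsetP => u; rewrite !inE => cuz; apply: (connect_trans cuz); apply: connect1.
      by apply/existsP; exists e2; rewrite ne2 he2 !eqxx.
    by exists w; rewrite !inE ?connect0.
  by move=> lt; have := maxz w wS; rewrite /= leqNgt lt.
case/connectP: cwz => p pp tl.
move: tl; case: (shortenP pp) => p' pp' up' _ tl.
pose P := fun a e => (h e != h' e) && (h' e == a).
have [q' [mq cq']] := @path_edges V I P h w p' pp'.
pose q := e2 :: q'.
have cq : chainP P h z q by rewrite /= /P ne2 he2 eqxx.
have hp : is_hyperpath E h z z q.
  split => //.
  - rewrite hchainE; apply: chainP_imp cq => x e /andP[ne /eqP <-].
    by rewrite /tail !inE eq_sym ne Ho'.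
  - by rewrite /= mq.
  - by rewrite /= mq.
have h2q : forall e, e \in q -> reverse_hyperpath h z q e = h' e.
  move=> e eq; rewrite rev_in //; have := chain_nth cq eq.
  by rewrite /P => /andP[_ /eqP].
apply: (cycle_step Ho Ho' Hk Hc hp h2q (e2 := e2)) => //.
by rewrite inE eqxx.
Qed.

Inductive star (V I : finType) (E : I -> {set V}) (k : nat) (h' : {ffun I -> V})
  : {ffun I -> V} -> Prop :=
| star0 : star E k h' h'
| starS h h2 : is_orientation E h -> k_hyperarc_connected E h k ->
    reversal_step E h h2 -> star E k h' h2 -> star E k h' h.

Lemma sum_cnt (V I : finType) (h : {ffun I -> V}) : \sum_(v : V) cnt h v = #|I|.
Proof.
have := rho_compl h setT; rewrite setCT rho_set0 addn0 rho_sum => <-.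
by apply: eq_bigl => v; rewrite in_setT.
Qed.

Lemma phase2 (V I : finType) (E : I -> {set V}) k h' :
  is_orientation E h' -> forall n h, #|diff h h'| <= n ->
  is_orientation E h -> k_hyperarc_connected E h k ->
  (forall v, cnt h v = cnt h' v) -> star E k h' h.
Proof.
move=> Ho' n; elim: n => [|n IH] h dn Ho Hk Hc.
  have -> : h = h'.
    apply/ffunP => e; apply/eqP; move: dn; rewrite leqn0 cards_eq0 => /eqP/setP/(_ e).
    by rewrite !inE => /negbFE.
  exact: star0.
case: (eqVneq h h') => [->|hh]; first exact: star0.
have [h2 [rs Ho2 Hk2 Hc2 lt]] := step2 Ho Ho' Hk Hc hh.
apply: starS rs _ => //; apply: IH => //; move: lt dn; move: #|diff h2 h'| #|diff h h'| => a b; lia.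
Qed.

Lemma phase1 (V I : finType) (E : I -> {set V}) k h' :
  is_orientation E h' -> k_hyperarc_connected E h' k ->
  forall n h, mu h h' <= n ->
  is_orientation E h -> k_hyperarc_connected E h k -> star E k h' h.
Proof.
move=> Ho' Hk' n; elim: n => [|n IH] h dn Ho Hk.
  apply: (phase2 Ho' (leqnn _)) => // v.
  have le : forall v, cnt h' v <= cnt h v.
    move=> u; move: dn; rewrite leqn0 => /eqP; rewrite /mu => /eqP.
    rewrite sum_nat_eq0 => /forallP /(_ u) /implyP /(_ isT) /eqP.
    by move/eqP; rewrite subn_eq0.
  apply/eqP; rewrite eqn_leq le andbT leqNgt; apply/negP => lt.
  have := @sum_lt V xpredT (fun v => cnt h' v) (fun v => cnt h v) v isT (fun u _ => le u) lt.
  by rewrite !sum_cnt ltnn.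
case: (boolP [exists s, cnt h s < cnt h' s]) => [/existsP [s lts]|/existsPn Hn].
  have [h2 [rs Ho2 Hk2 lt]] := step1 Ho Ho' Hk Hk' lts.
  apply: starS rs _ => //; apply: IH => //; move: lt dn; move: (mu h2 h') (mu h h') => a b; lia.
apply: IH => //; rewrite (_ : mu h h' = 0) //; rewrite /mu big1 // => v _.
by apply/eqP; rewrite subn_eq0 leqNgt Hn.
Qed.

Lemma star_seq (V I : finType) (E : I -> {set V}) k h' h :
  is_orientation E h' -> k_hyperarc_connected E h' k -> star E k h' h ->
  exists (l : nat) (H : nat -> {ffun I -> V}),
    [/\ H 0 = h, H l = h',
        (forall i, i <= l -> is_orientation E (H i) /\ k_hyperarc_connected E (H i) k) &
        (forall i, 1 <= i <= l -> reversal_step E (H i.-1) (H i))].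
Proof.
move=> Ho' Hk'; elim => [|h0 h2 Ho Hk rs _ [l [H [H0 Hl Hg Hr]]]].
  exists 0, (fun _ => h'); split => // i; rewrite ?leqn0 => //; case: i => //.
exists l.+1, (fun i => if i is i'.+1 then H i' else h0); split => //.
  by case => [|i] //= il; apply: Hg.
case => [|[|i]] //=.
  by move=> _; rewrite H0.
by move=> il; apply: (Hr i.+1).
Qed.

Unset Implicit Arguments.
Theorem mainTheorem3 (V I : finType) (E : I -> {set V}) (k : nat)
    (h h' : {ffun I -> V}) :
  hypergraph E ->
  is_orientation E h -> k_hyperarc_connected E h k ->
  is_orientation E h' -> k_hyperarc_connected E h' k ->
  exists (l : nat) (H : nat -> {ffun I -> V}),
    [/\ H 0 = h, H l = h',
        (forall i, i <= l -> is_orientation E (H i) /\ k_hyperarc_connected E (H i) k) &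
        (forall i, 1 <= i <= l -> reversal_step E (H i.-1) (H i))].
Proof.
move=> _ Ho Hk Ho' Hk'.
apply: (star_seq Ho' Hk').
exact: (phase1 Ho' Hk' (leqnn _) Ho Hk).
Qed.
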